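(* Let $A$ be a commutative nilpotent $\mathbb{F}_p$-algebra of finite dimension, with $A^e\neq0$ and $A^{e+1}=0$ for some $e\ge1$. With $N_t$, $q_t$, $s(\cdot)$, $i(\cdot)$ and $\delta(m)=\lfloor m^2/4\rfloor$ as defined below, \[ i(A)\le \sum_{t=1}^{e-1}\bigl(p^{-\delta(q_t)}-p^{-\delta(q_{t+1})}\bigr)s(N_t)+p^{-\delta(q_e)}s(N_e), \] where $i(A)$ is the number of ideals of $A$.
   Context: Algebras are commutative, associative, not necessarily unital. $N_k=\{a\in A: x_1\cdots x_k a=0\ \forall x_1,\dots,x_k\in A\}$ (so $N_0=0$, $N_e=A$). For $x\in A$, $q(x)=\dim_{\mathbb{F}_p}(\mathbb{F}_px+Ax)$ and $q_t=\min_{x\in N_t\setminus N_{t-1}}q(x)$. For a subspace $J$, $s(J)$ is the number of $\mathbb{F}_p$-subspaces of $J$. *)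

(* Defs.v *)
From HB Require Import structures.
From mathcomp Require Import all_boot all_order all_algebra all_field.
Set Implicit Arguments. Unset Strict Implicit. Unset Printing Implicit Defensive.
Import GRing.Theory.
Local Open Scope ring_scope.

(* The underlying F_p-vector space of an n-dimensional algebra: 'rV['F_p]_n.
   The (non-unital) multiplication is an explicit operation [mul]. *)
Notation vecA p n := 'rV['F_p]_n.

(* Axioms: commutative, associative, F_p-bilinear (left-linear + commutative). *)
Definition is_comm_alg_mul (p n : nat) (mul : vecA p n -> vecA p n -> vecA p n) : Prop :=
  [/\ (forall a b, mul a b = mul b a),
      (forall a b c, mul a (mul b c) = mul (mul a b) c),
      (forall a b c, mul (a + b) c = mul a c + mul b c) &
      (forall (k : 'F_p) a b, mul (k *: a) b = k *: mul a b)].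

Definition prodA (T : Type) (mul : T -> T -> T) (xs : seq T) (a : T) : T :=
  foldr mul a xs.

Definition Nk (p n : nat) (mul : vecA p n -> vecA p n -> vecA p n) (k : nat)
  : {set vecA p n} :=
  [set a | [forall xs : k.-tuple (vecA p n), prodA mul xs a == 0]].

Definition qx (p n : nat) (mul : vecA p n -> vecA p n -> vecA p n) (x : vecA p n)
  : nat :=
  \dim (<[x]> + span [seq mul a x | a <- enum [set: vecA p n]])%VS.

(* q_t = min_{x in N_t \ N_{t-1}} q(x).  (The default value n.+1 for an empty
   range is never used under the hypotheses, where N_t \ N_{t-1} <> 0 for
   1 <= t <= e.) *)
Definition qt (p n : nat) (mul : vecA p n -> vecA p n -> vecA p n) (t : nat) : nat :=
  \big[minn/n.+1]_(x in Nk mul t :\: Nk mul t.-1) qx mul x.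

Definition is_subspace (p n : nat) (S : {set vecA p n}) : bool :=
  [&& (0 : vecA p n) \in S,
      [forall x in S, forall y in S, x + y \in S] &
      [forall k : 'F_p, forall x in S, k *: x \in S]].

Definition sJ (p n : nat) (J : {set vecA p n}) : nat :=
  #|[set S : {set vecA p n} | is_subspace S & S \subset J]|.

Definition is_ideal (p n : nat) (mul : vecA p n -> vecA p n -> vecA p n)
  (I : {set vecA p n}) : bool :=
  is_subspace I && [forall a : vecA p n, forall x in I, mul a x \in I].

Definition iA (p n : nat) (mul : vecA p n -> vecA p n -> vecA p n) : nat :=
  #|[set I : {set vecA p n} | is_ideal mul I]|.

Definition delta (m : nat) : nat := (m * m) %/ 4.

(* Main.v *)
Require Import Defs.
From HB Require Import structures.
From mathcomp Require Import all_boot all_order all_algebra all_field.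
From mathcomp Require Import zify ring.
Set Implicit Arguments. Unset Strict Implicit. Unset Printing Implicit Defensive.
Import GRing.Theory Num.Theory.
Local Open Scope ring_scope.
Lemma bigmin_le (T : finType) (A : pred T) (F : T -> nat) m x0 :
  x0 \in A -> (\big[minn/m]_(x in A) F x <= F x0)%N.
Proof.
move=> Hx; rewrite unlock.
have : x0 \in index_enum T by rewrite mem_index_enum.
elim: (index_enum T) => [|y s IH] //=; rewrite in_cons => /orP[/eqP<-|/IH].
  by rewrite Hx geq_minl.
by move=> H; case: ifP => _; rewrite ?geq_min H ?orbT.
Qed.

Section Sub.
Variables (p n : nat).
Local Notation vT := 'rV['F_p]_n.

Lemma subspaceP (S : {set vT}) :
  reflect [/\ 0 \in S, (forall x y, x \in S -> y \in S -> x + y \in S) &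
     (forall k x, x \in S -> k *: x \in S)] (is_subspace S).
Proof.
apply: (iffP and3P) => [[H0 /forallP HD /forallP HZ]|[H0 HD HZ]]; split => //.
- by move=> x y Hx Hy; move/implyP: (HD x) => /(_ Hx)/forall_inP/(_ y Hy).
- by move=> k x Hx; move/forall_inP: (HZ k) => /(_ x Hx).
- by apply/forall_inP => x Hx; apply/forall_inP => y Hy; apply: HD.
- by apply/forallP => k; apply/forall_inP => x Hx; apply: HZ.
Qed.

Lemma sub_sum (S : {set vT}) (I : Type) (r : seq I) (P : pred I) (F : I -> vT) :
  is_subspace S -> (forall i, P i -> F i \in S) -> \sum_(i <- r | P i) F i \in S.
Proof.
move=> /subspaceP [H0 HD _] HF; elim/big_ind: _ => //.
Qed.

Lemma subsp_span (S : {set vT}) (X : seq vT) v :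
  is_subspace S -> {subset X <= S} -> v \in <<X>>%VS -> v \in S.
Proof.
move=> HS HX; rewrite -{1}[X]in_tupleE => /coord_span ->.
apply: sub_sum => // i _; case/subspaceP: HS => _ _ HZ; apply: HZ.
by apply: HX; rewrite mem_nth.
Qed.

Lemma sub_spanE (S : {set vT}) v :
  is_subspace S -> (v \in <<enum S>>%VS) = (v \in S).
Proof.
move=> HS; apply/idP/idP; first by apply: subsp_span => // x; rewrite mem_enum.
by move=> Hv; apply: memv_span; rewrite mem_enum.
Qed.

End Sub.

Section Alg.
Variables (p n : nat).
Local Notation vT := 'rV['F_p]_n.
Variable mul : vT -> vT -> vT.
Hypothesis Hm : is_comm_alg_mul mul.

Lemma mulC a b : mul a b = mul b a. Proof. by case: Hm. Qed.
Lemma mulA a b c : mul a (mul b c) = mul (mul a b) c. Proof. by case: Hm. Qed.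
Lemma mulDl a b c : mul (a + b) c = mul a c + mul b c. Proof. by case: Hm. Qed.
Lemma mulZl k a b : mul (k *: a) b = k *: mul a b. Proof. by case: Hm. Qed.
Lemma mulDr a b c : mul c (a + b) = mul c a + mul c b.
Proof. by rewrite mulC mulDl !(mulC c). Qed.
Lemma mulZr k a b : mul b (k *: a) = k *: mul b a.
Proof. by rewrite mulC mulZl mulC. Qed.
Lemma mul0l a : mul 0 a = 0.
Proof. by rewrite -[X in mul X a](scale0r (0:vT)) mulZl scale0r. Qed.
Lemma mul0r a : mul a 0 = 0.
Proof. by rewrite mulC mul0l. Qed.

Lemma prodA0 xs : prodA mul xs 0 = 0.
Proof. by elim: xs => //= x xs ->; rewrite mul0r. Qed.
Lemma prodAD xs a b : prodA mul xs (a + b) = prodA mul xs a + prodA mul xs b.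
Proof. by elim: xs => //= x xs ->; rewrite mulDr. Qed.
Lemma prodAZ xs k a : prodA mul xs (k *: a) = k *: prodA mul xs a.
Proof. by elim: xs => //= x xs ->; rewrite mulZr. Qed.
Lemma prodA_mul xs b a : prodA mul xs (mul b a) = mul b (prodA mul xs a).
Proof.
elim: xs => //= x xs ->; by rewrite mulA (mulC x b) -mulA.
Qed.
Lemma prodA_cat xs ys a : prodA mul (xs ++ ys) a = prodA mul xs (prodA mul ys a).
Proof. by rewrite /prodA foldr_cat. Qed.

Lemma NkP k a : reflect (forall xs, size xs = k -> prodA mul xs a = 0) (a \in Nk mul k).
Proof.
rewrite inE; apply: (iffP forallP) => [H xs Hs | H xs].
  by move: (H (Tuple (introT eqP Hs))) => /eqP.
by apply/eqP/H; rewrite size_tuple.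
Qed.

Lemma Nk_subspace k : is_subspace (Nk mul k).
Proof.
apply/subspaceP; split.
- by apply/NkP => xs _; rewrite prodA0.
- by move=> x y /NkP Hx /NkP Hy; apply/NkP => xs Hs; rewrite prodAD Hx ?Hy ?addr0.
- by move=> c x /NkP Hx; apply/NkP => xs Hs; rewrite prodAZ Hx ?scaler0.
Qed.

Lemma Nk_mul k b a : a \in Nk mul k -> mul b a \in Nk mul k.
Proof. by move/NkP => H; apply/NkP => xs Hs; rewrite prodA_mul H ?mul0r. Qed.

Lemma Nk_ideal k : is_ideal mul (Nk mul k).
Proof.
rewrite /is_ideal Nk_subspace /=; apply/forallP => b; apply/forall_inP => a.
exact: Nk_mul.
Qed.

Lemma Nk_mono k : Nk mul k \subset Nk mul k.+1.
Proof.
apply/subsetP => a /NkP H; apply/NkP => [[|x xs]] //= [Hs].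
by rewrite H ?mul0r.
Qed.

Lemma Nk_monoS k l : (k <= l)%N -> Nk mul k \subset Nk mul l.
Proof.
move=> /subnK <-; elim: (l - k)%N => // d IH.
by rewrite addSn; apply: subset_trans IH (Nk_mono _).
Qed.

Lemma Nk0 a : (a \in Nk mul 0) = (a == 0).
Proof.
apply/NkP/eqP => [H | ->]; first by apply: (H [::]).
by move=> xs _; rewrite prodA0.
Qed.

End Alg.

Section Nil.
Variables (p n : nat).
Local Notation vT := 'rV['F_p]_n.
Variable mul : vT -> vT -> vT.
Hypothesis Hm : is_comm_alg_mul mul.
Variable e : nat.
Hypothesis Hnil : forall (xs : e.-tuple vT) a, prodA mul xs a = 0.

Lemma nilS xs a : (e <= size xs)%N -> prodA mul xs a = 0.
Proof.
move=> He; rewrite -(cat_take_drop e xs) prodA_cat.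
have Hs : size (take e xs) == e by rewrite size_takel.
exact: (Hnil (Tuple Hs)).
Qed.

Lemma NkeT a : a \in Nk mul e.
Proof. by apply/NkP => xs Hs; apply: nilS; rewrite Hs. Qed.

Lemma idealP (J : {set vT}) :
  is_ideal mul J -> is_subspace J /\ (forall a x, x \in J -> mul a x \in J).
Proof.
case/andP => HS /forallP H; split => // a x Hx.
by move/forall_inP: (H a) => /(_ x Hx).
Qed.

Lemma prodA_ideal (J : {set vT}) xs s : is_ideal mul J -> s \in J -> prodA mul xs s \in J.
Proof.
move=> /idealP [_ HJ] Hs; elim: xs => //= x xs IH; exact: HJ.
Qed.

Definition VMof (I : {set vT}) : {vspace vT} :=
  <<[seq mul a w | a <- enum [set: vT], w <- enum I]>>%VS.

Lemma nil_gen (I J : {set vT}) :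
  is_ideal mul J ->
  (forall v, v \in I -> exists2 s, s \in J & v - s \in VMof I) ->
  I \subset J.
Proof.
move=> HJ Hcov.
have [HJs HJm] := idealP HJ.
suff Q : forall r v, v \in I -> forall xs, size xs = (e - r)%N -> prodA mul xs v \in J.
  by apply/subsetP => v Hv; apply: (Q e v Hv [::]); rewrite subnn.
elim=> [|r IH] v Hv xs Hs.
  by rewrite nilS ?Hs ?subn0 //; case/subspaceP: HJs.
case: (leqP e r) => Her.
  by apply: IH => //; rewrite Hs; lia.
have Hk : (size xs).+1 = (e - r)%N by rewrite Hs; lia.
have [s Hs' Hm'] := Hcov v Hv.
rewrite -(subrK s v) prodAD //.
case/subspaceP: (HJs) => _ HD _; apply: (HD); last exact: prodA_ideal.
pose Jk := [set u | [forall ys : (size xs).-tuple vT, prodA mul ys u \in J]].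
have HJk : is_subspace Jk.
  apply/subspaceP; split.
  - by rewrite inE; apply/forallP => ys; rewrite prodA0 //; case/subspaceP: HJs.
  - move=> x y; rewrite !inE => /forallP Hx /forallP Hy; apply/forallP => ys.
    by rewrite prodAD //; apply: HD.
  - move=> c x; rewrite !inE => /forallP Hx; apply/forallP => ys.
    by rewrite prodAZ //; case/subspaceP: HJs => _ _ HZ; apply: HZ.
have : v - s \in Jk.
  apply: subsp_span HJk _ Hm' => u /allpairsP [[a w] [_ Hw ->]] /=.
  rewrite inE; apply/forallP => ys; rewrite prodA_mul //.
  rewrite -[mul a _]/(prodA mul (a :: ys) w); apply: (IH w); first by rewrite -mem_enum. by rewrite size_tuple.
by rewrite inE => /forallP /(_ (Tuple (introT eqP (erefl (size xs))))).
Qed.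

End Nil.

Section Family.
Variables (p n : nat).
Local Notation vT := 'rV['F_p]_n.
Local Notation F := 'F_p.

Lemma free_coef (X : seq vT) (c d : 'I_(size X) -> F) :
  free X -> \sum_k c k *: X`_k = \sum_k d k *: X`_k -> forall k, c k = d k.
Proof.
move=> HX Heq k.
have := coord_sum_free c k (X := in_tuple X) HX.
by rewrite [X in coord _ _ X]Heq coord_sum_free.
Qed.

Lemma family (I : {set vT}) (VM : {vspace vT}) (Fs Ps : seq vT) :
  is_subspace I -> free (Fs ++ Ps) -> (<<Fs>> <= VM)%VS ->
  (forall v, (v \in I) = (v \in <<Fs ++ Ps>>%VS)) ->
  exists f : 'M[F]_(size Ps, size Fs) -> {set vT},
   injective f /\ forall B, [/\ is_subspace (f B), f B \subset I &
       forall v, v \in I -> exists2 s, s \in f B & v - s \in VM].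
Proof.
move=> HI Hfree HFM HIspan.
have HfF : free Fs by apply: catl_free Hfree.
have HfP : free Ps by apply: catr_free Hfree.
have Hdir : (<<Fs>> :&: <<Ps>> = 0)%VS.
  by move: Hfree; rewrite cat_free => /and3P [_ _ /directv_addP].
pose g (B : 'M[F]_(size Ps, size Fs)) (r : 'I_(size Ps)) :=
  Ps`_r + \sum_(l < size Fs) B r l *: Fs`_l.
pose lin B (a : 'rV[F]_(size Ps)) := \sum_(r < size Ps) a 0 r *: g B r.
pose f B := [set lin B a | a : 'rV[F]_(size Ps)].
have gF B r : g B r - Ps`_r \in <<Fs>>%VS.
  rewrite /g addrC addKr; apply: memv_suml => l _; apply: memvZ.
  by apply: memv_span; rewrite mem_nth.
have linD B a a' : lin B (a + a') = lin B a + lin B a'.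
  by rewrite /lin -big_split; apply: eq_bigr => r _; rewrite mxE scalerDl.
have linZ B c a : lin B (c *: a) = c *: lin B a.
  by rewrite /lin scaler_sumr; apply: eq_bigr => r _; rewrite mxE scalerA.
have lin0 B : lin B 0 = 0.
  by rewrite /lin big1 // => r _; rewrite mxE scale0r.
have fsub B : is_subspace (f B).
  apply/subspaceP; split.
  - by apply/imsetP; exists 0; rewrite ?inE ?lin0.
  - move=> x y /imsetP [a _ ->] /imsetP [a' _ ->]; apply/imsetP.
    by exists (a + a'); rewrite ?inE ?linD.
  - move=> c x /imsetP [a _ ->]; apply/imsetP.
    by exists (c *: a); rewrite ?inE ?linZ.
have memI x : x \in Fs ++ Ps -> x \in I.
  by move=> Hx; rewrite HIspan; apply: memv_span.
have gI B r : g B r \in I.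
  case/subspaceP: (HI) => _ HD HZ; apply: HD.
    by apply: memI; rewrite mem_cat mem_nth ?orbT.
  apply: sub_sum => // l _; apply: HZ; apply: memI.
  by rewrite mem_cat mem_nth.
have linE B a : lin B a = \sum_(s < size Ps) a 0 s *: Ps`_s
      + \sum_(s < size Ps) a 0 s *: (g B s - Ps`_s).
  rewrite /lin -big_split; by apply: eq_bigr => s _ /=; rewrite scalerBr addrC subrK.
have lin_delta B r : lin B (\row_s (s == r)%:R) = g B r.
  rewrite /lin (bigD1 r) //= mxE eqxx scale1r big1 ?addr0 // => s /negPf Hs.
  by rewrite mxE Hs scale0r.
exists f; split.
  move=> B B' Heq; apply/matrixP => r l.
  have : g B r \in f B' by rewrite -Heq; apply/imsetP; exists (\row_s (s == r)%:R).
  case/imsetP => a _ Ha.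
  set x := Ps`_r - \sum_(s < size Ps) a 0 s *: Ps`_s.
  set y := (g B r - Ps`_r) - \sum_(s < size Ps) a 0 s *: (g B' s - Ps`_s).
  have Hxy : x + y = 0.
    by rewrite /x /y Ha linE (addrAC (\sum_(s < size Ps) _)) addrK addrA subrK subrr.
  have Hx : x \in <<Ps>>%VS.
    apply: memvB; first by apply: memv_span; rewrite mem_nth.
    by apply: memv_suml => s _; apply: memvZ; apply: memv_span; rewrite mem_nth.
  have Hy : y \in <<Fs>>%VS.
    by apply: memvB => //; apply: memv_suml => s _; apply: memvZ.
  have Hx0 : x = 0.
    apply/eqP; rewrite -memv0 -Hdir memv_cap Hx andbT.
    have -> : x = - y by apply/eqP; rewrite -addr_eq0 Hxy.
    by rewrite memvN.
  have Ha' : a = \row_s (s == r)%:R.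
    apply/rowP => s; rewrite [RHS]mxE.
    have := free_coef (c := fun s => a 0 s) (d := fun s => (s == r)%:R) HfP.
    move=> H; apply: H.
    rewrite [RHS](bigD1 r) //= eqxx scale1r.
    rewrite [X in _ = _ + X]big1 ?addr0; last first.
      by move=> s' /negPf ->; rewrite scale0r.
    by move/eqP: Hx0; rewrite /x subr_eq0 eq_sym => /eqP.
  move: Ha; rewrite Ha' lin_delta => /addrI Hs.
  by apply: (free_coef (c := fun l => B r l) (d := fun l => B' r l) HfF Hs).
move=> B; split => //.
  by apply/subsetP => x /imsetP [a _ ->]; apply: sub_sum => // s _;
    case/subspaceP: HI => _ _ HZ; apply: HZ.
move=> v; rewrite HIspan span_cat => /memv_addP [f0 Hf0 [w Hw ->]].
pose c := \row_r coord (in_tuple Ps) r w.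
exists (lin B c); first by apply/imsetP; exists c.
have -> : f0 + w - lin B c = f0 + \sum_(s < size Ps) c 0 s *: (Ps`_s - g B s).
  rewrite -addrA; congr (_ + _).
  rewrite [w in LHS](coord_span (X := in_tuple Ps) Hw) /lin -sumrB; apply: eq_bigr => s _.
  by rewrite scalerBr mxE.
apply: (subvP HFM); apply: memvD => //; apply: memv_suml => s _; apply: memvZ.
by rewrite -opprB memvN.
Qed.
End Family.

Lemma delta_le k : (delta k <= (k - k./2) * k./2)%N.
Proof. rewrite /delta -divn2. nia. Qed.
Lemma delta_mono a b : (a <= b)%N -> (delta a <= delta b)%N.
Proof. move=> H; apply: leq_div2r; exact: leq_mul. Qed.

Lemma half_leq m : ((m.+1)./2 <= m)%N.
Proof. rewrite -divn2; lia. Qed.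
Lemma arith1 m d : (m < d)%N ->
  (m.+1 - (m.+1)./2 <= m - (m.+1)./2 + (d - m))%N.
Proof. rewrite -divn2; lia. Qed.

Section Main.
Variables (p n : nat).
Local Notation vT := 'rV['F_p]_n.
Variable mul : vT -> vT -> vT.
Hypothesis Hm : is_comm_alg_mul mul.
Variable e : nat.
Hypothesis Hnil : forall (xs : e.-tuple vT) a, prodA mul xs a = 0.
Hypothesis Hp : prime p.

Definition gen (S : {set vT}) : {set vT} :=
  \bigcap_(J | is_ideal mul J && (S \subset J)) J.

Lemma gen_sub (S : {set vT}) : S \subset gen S.
Proof. by apply/bigcapsP => J /andP []. Qed.

Lemma gen_min (S J : {set vT}) : is_ideal mul J -> S \subset J -> gen S \subset J.
Proof. by move=> HJ HS; apply: bigcap_inf; rewrite HJ HS. Qed.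

Lemma gen_ideal (S : {set vT}) : is_ideal mul (gen S).
Proof.
apply/andP; split.
  apply/subspaceP; split.
  - by apply/bigcapP => J /andP [/idealP [/subspaceP [] ] ].
  - move=> x y /bigcapP Hx /bigcapP Hy; apply/bigcapP => J HJ.
    case/andP: (HJ) => /idealP [/subspaceP [_ HD _] _] _.
    by apply: HD; [apply: Hx | apply: Hy].
  - move=> c x /bigcapP Hx; apply/bigcapP => J HJ.
    case/andP: (HJ) => /idealP [/subspaceP [_ _ HZ] _] _.
    by apply: HZ; apply: Hx.
apply/forallP => a; apply/forall_inP => x /bigcapP Hx; apply/bigcapP => J HJ.
case/andP: (HJ) => /idealP [_ HM] _; by apply: HM; apply: Hx.
Qed.

Lemma fiber_bound t (I : {set vT}) :
  (0 < t)%N -> is_ideal mul I -> I \subset Nk mul t -> ~~ (I \subset Nk mul t.-1) ->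
  (p ^ delta (qt mul t) <= #|[set S | is_subspace S & gen S == I]|)%N.
Proof.
move=> Ht HI HIt /subsetPn [x HxI HxN].
have [HIs HIm] := idealP HI.
pose VI := <<enum I>>%VS.
pose VM := VMof mul I.
have memVI v : (v \in VI) = (v \in I) by apply: sub_spanE.
have HVMI : (VM <= VI)%VS.
  apply/span_subvP => u /allpairsP [[a w] [_ Hw ->]] /=.
  by rewrite memVI HIm // -mem_enum.
have HVMne : ~~ (VI <= VM)%VS.
  apply/negP => HVIM; move/negP: HxN; apply.
  have : I \subset Nk mul 0.
    apply: (nil_gen Hm Hnil (Nk_ideal Hm 0)) => v Hv.
    exists 0; first by rewrite Nk0.
    by rewrite subr0; apply: (subvP HVIM); rewrite memVI.
  by move=> H; apply: (subsetP (Nk_monoS Hm (leq0n t.-1))); apply: (subsetP H).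
have Hmd : (\dim VM < \dim VI)%N by rewrite (ltn_leqif (dimv_leqif_sup HVMI)).
have Hxt : x \in Nk mul t :\: Nk mul t.-1 by rewrite inE HxN (subsetP HIt).
have Hq : (qt mul t <= (\dim VM).+1)%N.
  rewrite /qt; apply: leq_trans (bigmin_le _ _ Hxt) _.
  rewrite /qx; apply: leq_trans (dimv_add_leqif _ _).1 _.
  have H1 := leq_b1 (x != 0).
  suff H2 : (\dim <<[seq mul a x | a <- enum [set: vT]]>> <= \dim VM)%N.
    by rewrite dim_vline -(add1n (\dim VM)) leq_add.
  apply: dimvS.
  apply/span_subvP => u /mapP [a _ ->]; apply: memv_span.
  by apply: allpairs_f; rewrite mem_enum ?inE.
set m := \dim VM.
pose C := (VI :\: VM)%VS.
pose j := (m.+1)./2.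
pose Fs := take j (vbasis VM).
pose Ps := drop j (vbasis VM) ++ vbasis C.
have HFP : Fs ++ Ps = vbasis VM ++ vbasis C by rewrite catA cat_take_drop.
have HspanFP : (<<Fs ++ Ps>> = VI)%VS.
  rewrite HFP span_cat !(span_basis (vbasisP _)) addvC addv_diff.
  exact/addv_idPl.
have Hfree : free (Fs ++ Ps).
  rewrite HFP cat_free !(basis_free (vbasisP _)) /=.
  rewrite !(span_basis (vbasisP _)); apply/directv_addP.
  by rewrite capvC capv_diff.
have HFM : (<<Fs>> <= VM)%VS.
  by apply/span_subvP => u /mem_take; apply: vbasis_mem.
have HIspan v : (v \in I) = (v \in <<Fs ++ Ps>>%VS) by rewrite HspanFP memVI.
have [f [finj fprop]] := family HIs Hfree HFM HIspan.
have Hsub : [set f B | B : 'M['F_p]_(size Ps, size Fs)] \subset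
            [set S | is_subspace S & gen S == I].
  apply/subsetP => S /imsetP [B _ ->]; have [Hs HsI Hcov] := fprop B.
  rewrite inE Hs /= eqEsubset gen_min //=.
  apply: (nil_gen Hm Hnil (gen_ideal _)) => v Hv.
  have [s Hs1 Hs2] := Hcov v Hv; exists s => //.
  exact: (subsetP (gen_sub _)).
apply: leq_trans (subset_leq_card Hsub).
rewrite card_imset // card_mx card_Fp //.
rewrite leq_pexp2l ?prime_gt1 ?prime_gt0 //.
have HsF : size Fs = j by rewrite size_takel // size_tuple /j half_leq.
have HdC : \dim C = (\dim VI - m)%N.
  by have := dimv_cap_compl VI VM; rewrite (capv_idPr HVMI) /C /m => <-; rewrite addKn.
have HsP : size Ps = (m - j + (\dim VI - m))%N.
  by rewrite size_cat size_drop !size_tuple HdC.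
apply: leq_trans (delta_mono Hq) _; apply: leq_trans (delta_le _) _.
rewrite HsF HsP /j; apply: leq_mul => //; exact: arith1.
Qed.
End Main.

Section Count.
Variables (p n : nat).
Local Notation vT := 'rV['F_p]_n.
Variable mul : vT -> vT -> vT.
Hypothesis Hm : is_comm_alg_mul mul.
Variable e : nat.
Hypothesis Hnil : forall (xs : e.-tuple vT) a, prodA mul xs a = 0.
Hypothesis Hp : prime p.

Definition cset (P : {set vT} -> bool) t := [set X | P X & X \subset Nk mul t].
Definition lset (P : {set vT} -> bool) t :=
  [set X | P X & (X \subset Nk mul t) && ~~ (X \subset Nk mul t.-1)].

Lemma split_count (P : {set vT} -> bool) t : (0 < t)%N ->
  #|cset P t| = (#|cset P t.-1| + #|lset P t|)%N.
Proof.
move=> Ht; rewrite -(cardsID [set X : {set vT} | X \subset Nk mul t.-1] (cset P t)).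
have Hmono : Nk mul t.-1 \subset Nk mul t := Nk_monoS Hm (leq_pred t).
have E1 : cset P t :&: [set X : {set vT} | X \subset Nk mul t.-1] = cset P t.-1.
  apply/setP => X; rewrite !inE.
  case: (P X) => //=; apply/andP/idP => [[_ //]|H]; split => //.
  exact: subset_trans H Hmono.
have E2 : cset P t :\: [set X : {set vT} | X \subset Nk mul t.-1] = lset P t.
  by apply/setP => X; rewrite !inE; case: (P X); rewrite //= andbC.
by rewrite E1 E2.
Qed.

Lemma level_bound t : (0 < t)%N ->
  (#|lset (is_ideal mul) t| * p ^ delta (qt mul t) <= #|lset (@is_subspace p n) t|)%N.
Proof.
move=> Ht.
rewrite -[X in (_ <= X)%N]sum1_card (partition_big (gen mul) (mem (lset (is_ideal mul) t))) /=; last first.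
  move=> S; rewrite !inE => /andP [HS /andP [HSt HSt1]].
  rewrite gen_ideal //= gen_min ?Nk_ideal //=.
  apply/negP => H; move/negP: HSt1; apply.
  exact: subset_trans (gen_sub _ _) H.
rewrite -sum1_card big_distrl /= leq_sum // => I HI; rewrite mul1n.
move: (HI); rewrite inE => /andP [HIi /andP [HIt HIt1]].
apply: leq_trans (fiber_bound Hm Hnil Hp Ht HIi HIt HIt1) _.
rewrite [X in (_ <= X)%N]sum1dep_card; apply: subset_leq_card; apply/subsetP => S.
rewrite !inE => /andP [HS /eqP HgS]; rewrite HgS eqxx andbT HS /=.
have HSI : S \subset I by rewrite -HgS gen_sub.
rewrite (subset_trans HSI HIt) /=; apply/negP => H; move/negP: HIt1; apply.
by rewrite -HgS; apply: gen_min => //; apply: Nk_ideal.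
Qed.

End Count.

Unset Implicit Arguments.

Theorem corollary2p5 (p n : nat) (mul : 'rV['F_p]_n -> 'rV['F_p]_n -> 'rV['F_p]_n)
  (e : nat) :
  prime p ->
  is_comm_alg_mul mul ->
  (0 < e)%N ->
  (* A^e <> 0 : some product of e elements is nonzero *)
  (exists (xs : e.-1.-tuple 'rV['F_p]_n) (a : 'rV['F_p]_n), prodA mul xs a != 0) ->
  (* A^(e+1) = 0 : every product of e+1 elements vanishes *)
  (forall (xs : e.-tuple 'rV['F_p]_n) (a : 'rV['F_p]_n), prodA mul xs a = 0) ->
  (iA mul)%:R <=
    \sum_(1 <= t < e)
       ((p%:R : rat) ^- delta (qt mul t) - (p%:R : rat) ^- delta (qt mul t.+1))
         * (sJ (Nk mul t))%:R
    + (p%:R : rat) ^- delta (qt mul e) * (sJ (Nk mul e))%:R.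
Proof.
move=> Hp Hm He [xs0 [a0 Ha0]] Hnil.
pose w t := (p%:R : rat) ^- delta (qt mul t).
have HiA : iA mul = #|cset mul (is_ideal mul) e|.
  congr #|pred_of_set _|; apply/setP => I; rewrite !inE.
  by rewrite andb_idr // => _; apply/subsetP => x _; exact: (NkeT Hnil).
have HsJ t : sJ (Nk mul t) = #|cset mul (@is_subspace p n) t| by [].
rewrite HiA.
suff : forall E, (0 < E)%N -> (E <= e)%N ->
  (#|cset mul (is_ideal mul) E|%:R : rat) <=
    \sum_(1 <= t < E) (w t - w t.+1) * (sJ (Nk mul t))%:R + w E * (sJ (Nk mul E))%:R.
  by move/(_ e He (leqnn e)).
elim=> // E IH _ HE.
case: (posnP E) => [E0 | Epos].
  subst E; rewrite big_geq // add0r.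
  have Hw1 : w 1%N = 1.
    suff Hq : (delta (qt mul 1) = 0)%N by rewrite /w Hq expr0 invr1.
    pose y := prodA mul xs0 a0.
    have Hy1 : y \in Nk mul 1.
      apply/NkP => -[|b [|? ?]] //= _.
      rewrite -[mul b _]/(prodA mul (b :: xs0) a0); apply: (nilS Hnil).
      by rewrite /= size_tuple prednK.
    have Hy : y \in Nk mul 1 :\: Nk mul 1.-1 by rewrite inE Hy1 andbT Nk0.
    have Hq1 : (qt mul 1 <= 1)%N.
      rewrite /qt; apply: leq_trans (bigmin_le _ _ Hy) _.
      rewrite /qx; apply: leq_trans (dimv_add_leqif _ _).1 _.
      have -> : (<<[seq mul a y | a <- enum [set: 'rV['F_p]_n]]>> = 0)%VS.
        apply/eqP; rewrite -subv0; apply/span_subvP => u /mapP [a _ ->].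
        by rewrite memv0; move/NkP: Hy1 => /(_ [:: a] erefl) /= ->.
      by rewrite dimv0 addn0 dim_vline leq_b1.
    by apply/eqP; rewrite -leqn0; apply: leq_trans (delta_mono Hq1) _.
  rewrite Hw1 mul1r ler_nat HsJ; apply: subset_leq_card; apply/subsetP => I.
  by rewrite !inE => /andP [/andP [HI _] ->]; rewrite HI.
have IH' := IH Epos (ltnW HE).
rewrite big_nat_recr //= (split_count Hm _ (ltn0Sn E)) /=.
rewrite (HsJ E.+1) (split_count Hm _ (ltn0Sn E)) /= -(HsJ E) !natrD.
set S := \sum_(1 <= i < E) _.
set L := #|lset mul (is_ideal mul) E.+1|.
set M := #|lset mul (@is_subspace p n) E.+1|.
have -> : S + (w E - w E.+1) * (sJ (Nk mul E))%:R +
          w E.+1 * ((sJ (Nk mul E))%:R + M%:R) =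
          (S + w E * (sJ (Nk mul E))%:R) + w E.+1 * M%:R by ring.
apply: lerD => //.
rewrite /w ler_pdivlMl ?exprn_gt0 ?ltr0n ?prime_gt0 //.
rewrite -natrX -natrM ler_nat mulnC.
exact: (level_bound Hm Hnil Hp (ltn0Sn E)).
Qed.
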